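(* Consider $f:\mathbb R^n\to\mathbb R$ convex and continuously differentiable, $A\in\mathbb R^{m\times n}$, $b\in\mathbb R^m$, and the parameters and algorithm described in the context. For the same initial points and parameters, a sequence $\{(x_k,\lambda_k)\}_{k\ge0}$ is generated by the algorithm (Case I, resp. Case II) if and only if for every $k\ge1$ it satisfies $x_{k+1}-\bar x_k=-\gamma\big[g_{k+1}+A^\top(\lambda_{k+1}+\alpha_k(\lambda_{k+1}-\lambda_k))+\beta A^\top(Ax_{k+1}-b)\big]$ and $\lambda_{k+1}-\bar\lambda_k=\delta\big[Ax_{k+1}-b+\alpha_kA(x_{k+1}-x_k)\big]$, where $g_{k+1}=\nabla f(x_{k+1})$ in Case I and $g_{k+1}=\nabla f(\bar x_k)$ in Case II.
   Context: Parameter sequence: $\{t_k\}_{k\ge1}$ is nondecreasing, $t_1=1$, $t_k>1$ for all $k>2$, $t_k\to+\infty$, and $t_{k+1}^2-t_k^2\le\rho t_{k+1}$ for all $k\ge 1$, with fixed $\rho\in(0,1]$. Fix $\eta\in[\rho,1]$, $\gamma>0$, $\delta>0$, $\beta\ge0$. Algorithm: initial points $x_0=x_1\in\mathbb R^n$, $\lambda_0=\lambda_1\in\mathbb R^m$. For $k=1,2,\dots$: set $\alpha_k=(t_{k+1}-\eta)/\eta$, $c_k=t_{k+1}/\eta$, $\bar x_k=x_k+\frac{t_k-1}{t_{k+1}}(x_k-x_{k-1})$, $\bar\lambda_k=\lambda_k+\frac{t_k-1}{t_{k+1}}(\lambda_k-\lambda_{k-1})$, $p_k=c_k\bar\lambda_k-\alpha_k\lambda_k$,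 $r_k=\alpha_kAx_k+b$. Case I ($f$ convex and $C^1$): $x_{k+1}=\arg\min_{x}\{f(x)+\frac\beta2\|Ax-b\|^2+\frac1{2\gamma}\|x-\bar x_k\|^2+\langle p_k,Ax-b\rangle+\frac\delta2\|c_kAx-r_k\|^2\}$. Case II ($f$ convex with $L$-Lipschitz gradient, and $\gamma\le 1/L$): $x_{k+1}=\arg\min_{x}\{\langle\nabla f(\bar x_k),x\rangle+\frac\beta2\|Ax-b\|^2+\frac1{2\gamma}\|x-\bar x_k\|^2+\langle p_k,Ax-b\rangle+\frac\delta2\|c_kAx-r_k\|^2\}$. Then $\lambda_{k+1}=\bar\lambda_k+\delta(c_kAx_{k+1}-r_k)$. *)

(* Defs.v *)
From HB Require Import structures.
From mathcomp Require Import all_boot all_order all_algebra.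
From mathcomp Require Import all_classical all_reals all_analysis.
Set Implicit Arguments. Unset Strict Implicit. Unset Printing Implicit Defensive.
Import Order.TTheory GRing.Theory Num.Theory.
Import numFieldNormedType.Exports.
Local Open Scope classical_set_scope.
Local Open Scope ring_scope.

Section Defs.
Variable R : realType.

Definition inner (p : nat) (u v : 'cV[R]_p) : R := \sum_(i < p) u i ord0 * v i ord0.
Definition sqnorm (p : nat) (u : 'cV[R]_p) : R := inner u u.
Definition enorm (p : nat) (u : 'cV[R]_p) : R := Num.sqrt (sqnorm u).

Definition convex_fun (n : nat) (f : 'cV[R]_n -> R) : Prop :=
  forall (x y : 'cV[R]_n) (s : R), 0 <= s -> s <= 1 ->
    f (s *: x + (1 - s) *: y) <= s * f x + (1 - s) * f y.

Definition is_gradient (n : nat) (f : 'cV[R]_n -> R) (g : 'cV[R]_n -> 'cV[R]_n) : Prop :=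
  forall x : 'cV[R]_n, differentiable f x /\ forall h : 'cV[R]_n, 'd f x h = inner (g x) h.

Definition lipschitz_grad (n : nat) (g : 'cV[R]_n -> 'cV[R]_n) (L : R) : Prop :=
  forall x y : 'cV[R]_n, enorm (g x - g y) <= L * enorm (x - y).

Definition param_assumptions (t : nat -> R) (rho eta gamma delta beta : R) : Prop :=
  [/\ (forall k, (1 <= k)%N -> t k <= t k.+1) /\ t 1%N = 1,
      (forall k, (2 < k)%N -> 1 < t k),
      t @ \oo --> +oo,
      (forall k, (1 <= k)%N -> t k.+1 ^+ 2 - t k ^+ 2 <= rho * t k.+1)
    & [/\ 0 < rho, rho <= 1, rho <= eta, eta <= 1 &
        [/\ 0 < gamma, 0 < delta & 0 <= beta]]].

Section Algo.
Variables (n m : nat) (A : 'M[R]_(m, n)) (b : 'cV[R]_m).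
Variables (t : nat -> R) (eta gamma delta beta : R).
Variables (x : nat -> 'cV[R]_n) (lam : nat -> 'cV[R]_m).

Definition alpha k : R := (t k.+1 - eta) / eta.
Definition cc k : R := t k.+1 / eta.
Definition xbar k : 'cV[R]_n := x k + ((t k - 1) / t k.+1) *: (x k - x k.-1).
Definition lbar k : 'cV[R]_m := lam k + ((t k - 1) / t k.+1) *: (lam k - lam k.-1).
Definition pp k : 'cV[R]_m := cc k *: lbar k - alpha k *: lam k.
Definition rr k : 'cV[R]_m := alpha k *: (A *m x k) + b.

Definition Phi_common k (y : 'cV[R]_n) : R :=
  beta / 2 * sqnorm (A *m y - b) + 1 / (2 * gamma) * sqnorm (y - xbar k)
  + inner (pp k) (A *m y - b) + delta / 2 * sqnorm (cc k *: (A *m y) - rr k).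

Definition Phi_I (f : 'cV[R]_n -> R) k (y : 'cV[R]_n) : R := f y + Phi_common k y.
Definition Phi_II (g : 'cV[R]_n -> 'cV[R]_n) k (y : 'cV[R]_n) : R :=
  inner (g (xbar k)) y + Phi_common k y.

Definition is_argmin (phi : 'cV[R]_n -> R) (z : 'cV[R]_n) : Prop :=
  forall y, phi z <= phi y.

Definition lam_update k : Prop :=
  lam k.+1 = lbar k + delta *: (cc k *: (A *m x k.+1) - rr k).

Definition generated_I (f : 'cV[R]_n -> R) : Prop :=
  forall k, (1 <= k)%N -> is_argmin (Phi_I f k) (x k.+1) /\ lam_update k.
Definition generated_II (g : 'cV[R]_n -> 'cV[R]_n) : Prop :=
  forall k, (1 <= k)%N -> is_argmin (Phi_II g k) (x k.+1) /\ lam_update k.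

Definition implicit_form (gk : nat -> 'cV[R]_n) : Prop :=
  forall k, (1 <= k)%N ->
    x k.+1 - xbar k = - gamma *: (gk k + A^T *m (lam k.+1 + alpha k *: (lam k.+1 - lam k))
                                  + beta *: (A^T *m (A *m x k.+1 - b)))
    /\ lam k.+1 - lbar k = delta *: (A *m x k.+1 - b + alpha k *: (A *m (x k.+1 - x k))).

End Algo.
End Defs.

(* Main.v *)
Set Warnings "-all".
Require Import Defs.
From HB Require Import structures.
From mathcomp Require Import all_boot all_order all_algebra.
From mathcomp Require Import all_classical all_reals all_analysis.
From mathcomp Require Import ring lra.
Import Order.TTheory GRing.Theory Num.Theory.
Import numFieldNormedType.Exports.
Local Open Scope classical_set_scope.
Local Open Scope ring_scope.

Lemma limL (R : realType) (D : R -> R) (l c q : R) :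
  D s @[s --> 0^'] --> l ->
  (forall s, 0 < s < 1 -> 0 <= D s + c + s * q) -> 0 <= l + c.
Proof.
move=> HD H; rewrite leNgt; apply/negP => Hlt.
pose e := - (l + c) / 2.
have e0 : 0 < e by rewrite /e; lra.
have /cvgrPdist_lt/(_ e e0) H1 := HD.
have H2 : \forall s \near 0^'+, `|l - D s| < e.
  have sub : (fun u:R => 0 < u) `<=` (fun u => u != 0) by move=> u /= u0; rewrite gt_eqF.
  exact: (within_subset _ sub H1).
have e1 : 0 < e / (`|q| + 1) by apply: divr_gt0 => //; rewrite ltr_pwDr // normr_ge0.
near (0:R)^'+ => s.
have Hs1 : `|l - D s| < e by near: s; exact: H2.
have s0 : 0 < s by near: s; apply: nbhs_right_gt.
have sl1 : s < 1 by near: s; apply: nbhs_right_lt.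
have sle : s < e / (`|q| + 1) by near: s; apply: nbhs_right_lt.
have := H s; rewrite s0 sl1 => /(_ isT).
have qn : q <= `|q| := ler_norm q.
have : s * (`|q| + 1) < e by rewrite -ltr_pdivlMr // ltr_pwDr // normr_ge0.
move: Hs1; rewrite ltr_norml; case/andP => h1 h2.
have sq : s * q <= s * `|q| by rewrite ler_wpM2l // ltW.
move: h1 h2 e0; rewrite /e => h1 h2 e0 hA hB; nra.
Unshelve. all: by end_near.
Qed.

Lemma quotlim (R : realType) n (f : 'cV[R]_n -> R) g z h : is_gradient f g ->
  (fun s : R => s^-1 * (f (s *: h + z) - f z)) @ 0^' --> inner (g z) h.
Proof.
move=> Hg; case: (Hg z) => dz dd.
have cv := diff_derivable (v:=h) dz.
rewrite -dd -deriveE //.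
Qed.

Lemma testsc (R : realType) (a b : R) : a *: b = a * b.
Proof. by []. Qed.

Section Inner.
Variable R : realType.
Variable p : nat.
Implicit Types u v w : 'cV[R]_p.

Lemma innerC u v : inner u v = inner v u.
Proof. by apply: eq_bigr => i _; rewrite mulrC. Qed.
Lemma innerDl u v w : inner (u + v) w = inner u w + inner v w.
Proof. rewrite /inner -big_split /=; apply: eq_bigr => i _; by rewrite mxE mulrDl. Qed.
Lemma innerZl (a : R) u v : inner (a *: u) v = a * inner u v.
Proof. rewrite /inner mulr_sumr; apply: eq_bigr => i _; by rewrite mxE mulrA. Qed.
Lemma innerNl u v : inner (- u) v = - inner u v.
Proof. by rewrite -scaleN1r innerZl mulN1r. Qed.
Lemma innerBl u v w : inner (u - v) w = inner u w - inner v w.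
Proof. by rewrite innerDl innerNl. Qed.
Lemma innerDr u v w : inner w (u + v) = inner w u + inner w v.
Proof. by rewrite innerC innerDl !(innerC w). Qed.
Lemma innerZr (a : R) u v : inner v (a *: u) = a * inner v u.
Proof. by rewrite innerC innerZl innerC. Qed.
Lemma innerNr u v : inner v (- u) = - inner v u.
Proof. by rewrite innerC innerNl innerC. Qed.
Lemma innerBr u v w : inner w (u - v) = inner w u - inner w v.
Proof. by rewrite innerDr innerNr. Qed.
Lemma inner0r u : inner u 0 = 0.
Proof. by rewrite /inner big1 // => i _; rewrite mxE mulr0. Qed.
Lemma sqnormD u v (s : R) :
  sqnorm (u + s *: v) = sqnorm u + 2 * s * inner u v + s ^+ 2 * sqnorm v.
Proof.
rewrite /sqnorm innerDl !innerDr !innerZl !innerZr (innerC v u); ring.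
Qed.
Lemma sqnorm_ge0 u : 0 <= sqnorm u.
Proof. by apply: sumr_ge0 => i _; rewrite -expr2 sqr_ge0. Qed.
Lemma sqnorm_eq0 u : sqnorm u = 0 -> u = 0.
Proof.
move=> /eqP; rewrite psumr_eq0; last by move=> i _; rewrite -expr2 sqr_ge0.
move=> /allP H; apply/matrixP => i j; rewrite (ord1 j) mxE.
have := H i (mem_index_enum i); rewrite implyTb -expr2 sqrf_eq0 => /eqP //.
Qed.
End Inner.

Lemma inner_mul (R : realType) (q p : nat) (M : 'M[R]_(q, p)) u v :
  inner u (M *m v) = inner (M^T *m u) v.
Proof.
rewrite /inner.
under eq_bigr => i _ do rewrite mxE mulr_sumr.
rewrite exchange_big /=; apply: eq_bigr => j _.
rewrite mxE mulr_suml; apply: eq_bigr => i _; rewrite !mxE; ring.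
Qed.

Lemma opt (R : realType) n (phi F : 'cV[R]_n -> R) (gF G1 : 'cV[R]_n) (q : 'cV[R]_n -> R) z :
 (forall h s, phi (s *: h + z) = phi z + (F (s *: h + z) - F z) + s * inner G1 h + s^+2 * q h) ->
 (forall h, 0 <= q h) ->
 (forall y, F z + inner gF (y - z) <= F y) ->
 (forall h, (fun s : R => s^-1 * (F (s *: h + z) - F z)) @ 0^' --> inner gF h) ->
 is_argmin phi z <-> gF + G1 = 0.
Proof.
move=> Hexp Hq Hgi Hlim; split => [Hmin|E y]; last first.
  have := Hexp (y - z) 1; rewrite scale1r subrK => ->.
  have := Hgi y; have := Hq (y - z).
  have : inner gF (y - z) + inner G1 (y - z) = 0 by rewrite -innerDl E /inner big1 // => i _; rewrite mxE mul0r.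
  lra.
have key : forall h, 0 <= inner (gF + G1) h.
  move=> h; rewrite innerDl.
  apply: (@limL R (fun s => s^-1 * (F (s *: h + z) - F z)) (inner gF h) (inner G1 h) (q h) (Hlim h)) => s /andP[s0 s1].
  have := Hmin (s *: h + z); rewrite Hexp => Hm.
  have -> : s^-1 * (F (s *: h + z) - F z) + inner G1 h + s * q h
     = s^-1 * ((F (s *: h + z) - F z) + s * inner G1 h + s ^+ 2 * q h).
    by field; rewrite gt_eqF.
  apply: mulr_ge0; first by rewrite invr_ge0 ltW.
  lra.
have h1 := key (gF + G1); have h2 := key (- (gF + G1)).
rewrite innerNr in h2.
apply: sqnorm_eq0; rewrite /sqnorm; lra.
Qed.

Lemma grad_ineq (R : realType) n (f : 'cV[R]_n -> R) g : convex_fun f -> is_gradient f g ->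
  forall z y, f z + inner (g z) (y - z) <= f y.
Proof.
move=> Hc Hg z y.
have L : (fun s : R => - (s^-1 * (f (s *: (y - z) + z) - f z))) @ 0^' --> - inner (g z) (y - z).
  exact: (cvgN (@quotlim R n f g z (y - z) Hg)).
have := @limL R (fun s => - (s^-1 * (f (s *: (y - z) + z) - f z))) (- inner (g z) (y - z)) (f y - f z) 0 L.
suff : (forall s : R, 0 < s < 1 ->
   0 <= - (s^-1 * (f (s *: (y - z) + z) - f z)) + (f y - f z) + s * 0).
  by move=> H /(_ H); lra.
move=> s /andP[s0 s1].
have E : s *: (y - z) + z = s *: y + (1 - s) *: z.
  by apply/matrixP => i j; rewrite !mxE; ring.
have := Hc y z s (ltW s0) (ltW s1); rewrite -E => Hcv.
have : s^-1 * (f (s *: (y - z) + z) - f z) <= s^-1 * (s * (f y - f z)).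
  by apply: ler_wpM2l; [rewrite invr_ge0 ltW | lra].
rewrite mulKf ?gt_eqF //; lra.
Qed.


Definition G0 {R : realType} {n m} (A : 'M[R]_(m, n)) b t eta gamma delta beta x lam k (z : 'cV[R]_n) :=
  beta *: (A^T *m (A *m z - b)) + gamma^-1 *: (z - xbar t x k) + A^T *m pp t eta lam k
  + (delta * cc t eta k) *: (A^T *m (cc t eta k *: (A *m z) - rr A b t eta x k)).

Definition qq {R : realType} {n m} (A : 'M[R]_(m, n)) t eta gamma delta beta k (h : 'cV[R]_n) :=
  beta / 2 * sqnorm (A *m h) + 1 / (2 * gamma) * sqnorm h + delta / 2 * sqnorm (cc t eta k *: (A *m h)).

Lemma Qexp (R : realType) n m (A : 'M[R]_(m, n)) b t eta gamma delta beta x lam k z h s :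
  gamma != 0 ->
  Phi_common A b t eta gamma delta beta x lam k (s *: h + z)
  = Phi_common A b t eta gamma delta beta x lam k z
    + s * inner (G0 A b t eta gamma delta beta x lam k z) h
    + s ^+ 2 * qq A t eta gamma delta beta k h.
Proof.
move=> g0; rewrite /Phi_common /G0 /qq.
set p := pp t eta lam k; set r := rr A b t eta x k; set c := cc t eta k; set xb := xbar t x k.
have e1 : A *m (s *: h + z) - b = (A *m z - b) + s *: (A *m h).
  by rewrite mulmxDr -scalemxAr; apply/matrixP => i j; rewrite !mxE; ring.
have e2 : s *: h + z - xb = (z - xb) + s *: h.
  by apply/matrixP => i j; rewrite !mxE; ring.
have e3 : c *: (A *m (s *: h + z)) - r = (c *: (A *m z) - r) + s *: (c *: (A *m h)).
  by rewrite mulmxDr -scalemxAr; apply/matrixP => i j; rewrite !mxE; ring.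
rewrite e1 e2 e3 !sqnormD innerDr innerZr.
move: (A *m z - b) (z - xb) (c *: (A *m z) - r) p => u1 u2 u3 p'.
rewrite !innerDl !innerZl -!inner_mul innerZr.
field.
by rewrite g0.
Qed.

Lemma aux (R : realType) (ga d g V U be : R) : ga != 0 ->
  (g + (ga^-1 * d + V + be * U) = 0 <-> d = - ga * (g + V + be * U)).
Proof.
move=> g0; split => H.
  have -> : d = ga * (ga^-1 * d) by field; exact: g0.
  have -> : ga^-1 * d = - (g + V + be * U) by lra.
  ring.
rewrite H; field; exact: g0.
Qed.

Lemma LU (R : realType) n m (A : 'M[R]_(m, n)) b t eta delta x lam k :
  eta != 0 ->
  (lam_update A b t eta delta x lam k <->
   lam k.+1 - lbar t lam k = delta *: (A *m x k.+1 - b + alpha t eta k *: (A *m (x k.+1 - x k)))).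
Proof.
move=> e0.
have ca : cc t eta k = 1 + alpha t eta k by rewrite /cc /alpha; field.
have V : cc t eta k *: (A *m x k.+1) - rr A b t eta x k
         = A *m x k.+1 - b + alpha t eta k *: (A *m (x k.+1 - x k)).
  rewrite /rr mulmxBr ca; move: (A *m x k.+1) (A *m x k) => u v.
  by apply/matrixP => i j; rewrite !mxE; ring.
rewrite /lam_update V; split => [->|E].
  by rewrite addrAC subrr add0r.
by rewrite -E addrC subrK.
Qed.

Lemma G0simp (R : realType) n m (A : 'M[R]_(m, n)) b t eta gamma delta beta x lam k :
  eta != 0 -> lam_update A b t eta delta x lam k ->
  G0 A b t eta gamma delta beta x lam k (x k.+1)
  = gamma^-1 *: (x k.+1 - xbar t x k)
    + A^T *m (lam k.+1 + alpha t eta k *: (lam k.+1 - lam k))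
    + beta *: (A^T *m (A *m x k.+1 - b)).
Proof.
move=> e0 HU.
have ca : cc t eta k = 1 + alpha t eta k by rewrite /cc /alpha; field.
have E : A^T *m pp t eta lam k + (delta * cc t eta k) *: (A^T *m (cc t eta k *: (A *m x k.+1) - rr A b t eta x k))
   = A^T *m (lam k.+1 + alpha t eta k *: (lam k.+1 - lam k)).
  rewrite scalemxAr -mulmxDr; congr (_ *m _).
  rewrite HU /pp; move: (cc t eta k *: (A *m x k.+1) - rr A b t eta x k) => w.
  rewrite ca; move: (lbar t lam k) (lam k) => lb l.
  by apply/matrixP => i j; rewrite !mxE; ring.
rewrite /G0 -(addrA _ (A^T *m pp t eta lam k)) E.
move: (gamma^-1 *: (x k.+1 - xbar t x k)) (A^T *m (lam k.+1 + alpha t eta k *: (lam k.+1 - lam k))) (beta *: (A^T *m (A *m x k.+1 - b))) => u v w.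
by rewrite (addrC w) addrAC.
Qed.

Lemma stepk (R : realType) n m (A : 'M[R]_(m, n)) b t eta gamma delta beta x lam k (g : 'cV[R]_n) :
  eta != 0 -> gamma != 0 ->
  ((g + G0 A b t eta gamma delta beta x lam k (x k.+1) = 0 /\ lam_update A b t eta delta x lam k)
   <->
   (x k.+1 - xbar t x k = - gamma *: (g + A^T *m (lam k.+1 + alpha t eta k *: (lam k.+1 - lam k))
                                  + beta *: (A^T *m (A *m x k.+1 - b)))
    /\ lam k.+1 - lbar t lam k = delta *: (A *m x k.+1 - b + alpha t eta k *: (A *m (x k.+1 - x k))))).
Proof.
move=> e0 g0.
have key : lam_update A b t eta delta x lam k ->
  (g + G0 A b t eta gamma delta beta x lam k (x k.+1) = 0 <->
   x k.+1 - xbar t x k = - gamma *: (g + A^T *m (lam k.+1 + alpha t eta k *: (lam k.+1 - lam k))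
                                  + beta *: (A^T *m (A *m x k.+1 - b)))).
  move=> HU; rewrite G0simp //.
  move: (x k.+1 - xbar t x k) (A^T *m (lam k.+1 + alpha t eta k *: (lam k.+1 - lam k))) (A^T *m (A *m x k.+1 - b)) => d V U.
  split => E; apply/matrixP => i j; have := congr1 (fun M : 'M[R]_(n,1) => M i j) E; rewrite !mxE.
    by move/(aux _ _ _ _ _ _ _ g0) => ->.
  by move=> H; apply/(aux _ _ _ _ _ _ _ g0).
split => [[H1 H2]|[H1 H2]].
  by split; [apply/(key H2) | apply/(@LU R n m A b t eta delta x lam k e0)].
have HU : lam_update A b t eta delta x lam k by apply/(@LU R n m A b t eta delta x lam k e0).
by split => //; apply/(key HU).
Qed.

Lemma qq_ge0 (R : realType) n m (A : 'M[R]_(m, n)) t eta gamma delta beta k h :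
  0 < gamma -> 0 < delta -> 0 <= beta -> 0 <= qq A t eta gamma delta beta k h.
Proof.
move=> g0 d0 b0; rewrite /qq.
have := @sqnorm_ge0 _ _ (A *m h); have := @sqnorm_ge0 _ _ h; have := @sqnorm_ge0 _ _ (cc t eta k *: (A *m h)).
move: (sqnorm (A *m h)) (sqnorm h) (sqnorm (cc t eta k *: (A *m h))) => a1 a2 a3 h3 h2 h1.
have : 0 <= 1 / (2 * gamma) by rewrite divr_ge0 // mulr_ge0 // ltW.
move: (1 / (2 * gamma)) => gi gi0.
apply: addr_ge0; first apply: addr_ge0.
- apply: mulr_ge0 => //; lra.
- exact: mulr_ge0.
- apply: mulr_ge0 => //; lra.
Qed.

Lemma inner0l (R : realType) p (u : 'cV[R]_p) : inner 0 u = 0.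
Proof. by rewrite innerC inner0r. Qed.

Local Close Scope classical_set_scope.
Local Open Scope ring_scope.

Theorem proposition2p1 (R : realType) (n m : nat)
  (f : 'cV[R]_n -> R) (gradf : 'cV[R]_n -> 'cV[R]_n)
  (A : 'M[R]_(m, n)) (b : 'cV[R]_m)
  (t : nat -> R) (rho eta gamma delta beta : R)
  (x : nat -> 'cV[R]_n) (lam : nat -> 'cV[R]_m) :
  convex_fun f -> is_gradient f gradf -> continuous gradf ->
  param_assumptions t rho eta gamma delta beta ->
  x 0%N = x 1%N -> lam 0%N = lam 1%N ->
  (generated_I A b t eta gamma delta beta x lam f <->
     implicit_form A b t eta gamma delta beta x lam (fun k => gradf (x k.+1)))
  /\
  (forall L : R, 0 < L -> lipschitz_grad gradf L -> gamma <= 1 / L ->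
     (generated_II A b t eta gamma delta beta x lam gradf <->
        implicit_form A b t eta gamma delta beta x lam
          (fun k => gradf (xbar t x k)))).
Proof.
move=> Hc Hg _ [_ _ _ _ [r0 _ re _ [g0 d0 b0]]] _ _.
have e0 : eta != 0 by rewrite gt_eqF // (lt_le_trans r0 re).
have g0' : gamma != 0 by rewrite gt_eqF.
have HI : forall k, is_argmin (Phi_I A b t eta gamma delta beta x lam f k) (x k.+1) <->
   gradf (x k.+1) + G0 A b t eta gamma delta beta x lam k (x k.+1) = 0.
  move=> k; apply: (@opt R n _ f _ _ (qq A t eta gamma delta beta k)).
  - by move=> h s; rewrite /Phi_I Qexp //; ring.
  - by move=> h; apply: qq_ge0.
  - exact: grad_ineq.
  - by move=> h; apply: quotlim.
have HII : forall k, is_argmin (Phi_II A b t eta gamma delta beta x lam gradf k) (x k.+1) <->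
   gradf (xbar t x k) + G0 A b t eta gamma delta beta x lam k (x k.+1) = 0.
  move=> k.
  have O := (@opt R n (Phi_II A b t eta gamma delta beta x lam gradf k) (fun _ => 0) 0
     (gradf (xbar t x k) + G0 A b t eta gamma delta beta x lam k (x k.+1))
     (qq A t eta gamma delta beta k) (x k.+1)).
  rewrite -(add0r (gradf (xbar t x k) + G0 A b t eta gamma delta beta x lam k (x k.+1))); apply: O.
  - move=> h s; rewrite /Phi_II Qexp // innerDr innerZr innerDl; ring.
  - by move=> h; apply: qq_ge0.
  - by move=> y; rewrite inner0l addr0.
  - move=> h; rewrite inner0l.
    have -> : (fun s : R => s^-1 * (0 - 0)) = fun _ => (0 : R).
      by apply: funext => s; rewrite subrr mulr0.
    exact: cvg_cst.
split; last move=> L _ _ _.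
- split => H k k1.
    by apply/(@stepk R n m A b t eta gamma delta beta x lam k _ e0 g0'); rewrite -HI; apply: H.
  by rewrite HI; apply/(@stepk R n m A b t eta gamma delta beta x lam k _ e0 g0'); apply: H.
- split => H k k1.
    by apply/(@stepk R n m A b t eta gamma delta beta x lam k _ e0 g0'); rewrite -HII; apply: H.
  by rewrite HII; apply/(@stepk R n m A b t eta gamma delta beta x lam k _ e0 g0'); apply: H.
Qed.
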